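(* Let $d$ be a feasible integer and let $\{\zeta_i\}_{i=0}^d$ be any sequence of scalars in $\mathbb F$ with $\zeta_0=1$. Then there exists a standard $U_q(\widehat{\mathfrak{sl}}_2)$-module $V$ of diameter $d$ whose split sequence is $\{\zeta_i\}_{i=0}^d$.
   Context: Let $\mathbb F$ be an algebraically closed field and fix nonzero $q\in\mathbb F$ with $q^2\ne1$; write $[n]_q=(q^n-q^{-n})/(q-q^{-1})$. $U_q(\widehat{\mathfrak{sl}}_2)$ is the associative unital $\mathbb F$-algebra with generators $e_i^{\pm},K_i^{\pm1}$ ($i\in\{0,1\}$) and relations $K_iK_i^{-1}=K_i^{-1}K_i=1$, $K_0K_1=K_1K_0$, $K_ie_i^{\pm}K_i^{-1}=q^{\pm2}e_i^{\pm}$, $K_ie_j^{\pm}K_i^{-1}=q^{\mp2}e_j^{\pm}$ ($i\ne j$), $e_i^+e_i^--e_i^-e_i^+=(K_i-K_i^{-1})/(q-q^{-1})$, $e_0^{\pm}e_1^{\mp}=e_1^{\mp}e_0^{\pm}$, and $(e_i^\pm)^3e_j^\pm-[3]_q(e_i^\pm)^2e_j^\pm e_i^\pm+[3]_qe_i^\pm e_j^\pm(e_i^\pm)^2-e_j^\pm(e_i^\pm)^3=0$ ($i\ne j$). Tensor products of modules are formed via $e_i^+(v\otimes w)=e_i^+v\otimes K_iw+v\otimes e_i^+w$, $e_i^-(v\otimes w)=e_i^-v\otimes w+K_i^{-1}v\otimes e_i^-w$, $K_i(v\otimes w)=K_iv\otimes K_iw$. For nonzero $\alpha\in\mathbb F$,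 $V(\alpha)$ is the module with basis $x,y$ and $K_1x=qx$, $K_1y=q^{-1}y$, $e_1^-x=y$, $e_1^-y=0$, $e_1^+x=0$, $e_1^+y=x$, $K_0x=q^{-1}x$, $K_0y=qy$, $e_0^-x=0$, $e_0^-y=q\alpha^{-1}x$, $e_0^+x=q^{-1}\alpha y$, $e_0^+y=0$. A standard module of diameter $d$ is $V(\alpha_1)\otimes\cdots\otimes V(\alpha_d)$ with all $\alpha_i\in\mathbb F$ nonzero (for $d=0$: the trivial module, on which each $e_i^\pm$ acts as $0$ and each $K_i^{\pm1}$ as $1$). An integer $d$ is feasible if $d\ge0$ and $q^{2i}\ne1$ for $1\le i\le d$. For a standard $V$ of diameter $d$ and $0\le i\le d$, $U_i$ is the span of the basis vectors $v_1\otimes\cdots\otimes v_d$ ($v_k\in\{x,y\}$) with exactly $i$ factors equal to $y$. Fix nonzero $b,c,b^*,c^*\in\mathbb F$ and $u,v,u^*,v^*\in\mathbb F$ with $uv^*=-bb^*q^{-1}(q-q^{-1})^2$ and $vu^*=-cc^*q^{-1}(q-q^{-1})^2$; set $R=ue_0^++ve_1^-K_1$ and $L=u^*e_1^++v^*e_0^-K_0$. For a standard $V$ of feasible diameter $d$ and $0\le i\le d$, $L^iR^i$ maps the $1$-dimensional space $U_0$ into itself; the scalar $\zeta_i$ by which it acts there defines the split sequence $\{\zeta_i\}_{i=0}^d$ of $V$ (so $\zeta_0=1$). *)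

(* Defs.v *)
From HB Require Import structures.
From mathcomp Require Import all_boot all_order all_algebra.
Set Implicit Arguments. Unset Strict Implicit. Unset Printing Implicit Defensive.
Import Order.TTheory GRing.Theory.
Local Open Scope ring_scope.

(* Dimension of a standard module of diameter n: 2^n, written recursively so
   that a tensor factor V(alpha) (dim 2) splits off as a block decomposition. *)
Fixpoint tdim (n : nat) : nat := if n is n'.+1 then (tdim n' + tdim n')%N else 1%N.

(* Kronecker product A (x) B of a 2x2 matrix A with B, basis of the first
   factor ordered (x, y). *)
Definition kron2 (F : fieldType) (m n : nat) (A : 'M[F]_2) (B : 'M[F]_(m, n))
  : 'M[F]_(m + m, n + n) :=
  block_mx (A ord0 ord0 *: B) (A ord0 ord_max *: B)
           (A ord_max ord0 *: B) (A ord_max ord_max *: B).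

Inductive gen := E0p | E0m | E1p | E1m | K0 | K1 | K0i | K1i.

(* Action on V(alpha), as matrices acting on column coordinate vectors w.r.t.
   the basis (x, y): column j is the image of the j-th basis vector. *)
Definition act1 (F : fieldType) (q a : F) (g : gen) : 'M[F]_2 :=
  match g with
  | K1  => \matrix_(i, j) (if i == j then (if i == ord0 then q else q^-1) else 0)
  | K1i => \matrix_(i, j) (if i == j then (if i == ord0 then q^-1 else q) else 0)
  | K0  => \matrix_(i, j) (if i == j then (if i == ord0 then q^-1 else q) else 0)
  | K0i => \matrix_(i, j) (if i == j then (if i == ord0 then q else q^-1) else 0)
  | E1m => \matrix_(i, j) (if (i == ord_max) && (j == ord0) then 1 else 0)
  | E1p => \matrix_(i, j) (if (i == ord0) && (j == ord_max) then 1 else 0)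
  | E0m => \matrix_(i, j) (if (i == ord0) && (j == ord_max) then q * a^-1 else 0)
  | E0p => \matrix_(i, j) (if (i == ord_max) && (j == ord0) then q^-1 * a else 0)
  end.

(* Action on V(a_1) (x) ... (x) V(a_d), via the coproduct
   e_i^+ |-> e_i^+ (x) K_i + 1 (x) e_i^+,
   e_i^- |-> e_i^- (x) 1 + K_i^{-1} (x) e_i^-,
   K_i^{+-1} |-> K_i^{+-1} (x) K_i^{+-1}. *)
Fixpoint act (F : fieldType) (q : F) (s : seq F) (g : gen)
  : 'M[F]_(tdim (size s)) :=
  match s return 'M[F]_(tdim (size s)) with
  | [::] => match g with K0 | K1 | K0i | K1i => 1%:M | _ => 0 end
  | a :: s' =>
    match g with
    | E0p => kron2 (act1 q a E0p) (act q s' K0) + kron2 1%:M (act q s' E0p)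
    | E1p => kron2 (act1 q a E1p) (act q s' K1) + kron2 1%:M (act q s' E1p)
    | E0m => kron2 (act1 q a E0m) 1%:M + kron2 (act1 q a K0i) (act q s' E0m)
    | E1m => kron2 (act1 q a E1m) 1%:M + kron2 (act1 q a K1i) (act q s' E1m)
    | g' => kron2 (act1 q a g') (act q s' g')
    end
  end.

(* The vector x (x) x (x) ... (x) x spanning U_0. *)
Fixpoint vx (F : fieldType) (n : nat) : 'cV[F]_(tdim n) :=
  match n return 'cV[F]_(tdim n) with
  | 0 => 1%:M
  | n'.+1 => col_mx (vx F n') 0
  end.

Definition Rop (F : fieldType) (q u v : F) (s : seq F) :=
  u *: act q s E0p + v *: (act q s E1m *m act q s K1).
Definition Lop (F : fieldType) (q us vs : F) (s : seq F) :=
  us *: act q s E1p + vs *: (act q s E0m *m act q s K0).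

Definition feasible (F : fieldType) (q : F) (d : nat) : Prop :=
  forall i : nat, (1 <= i <= d)%N -> q ^+ (2 * i) != 1.

(* Main.v *)
Require Import Defs.
From HB Require Import structures.
From mathcomp Require Import all_boot all_order all_algebra all_field.
From Stdlib Require Import Ring Field.
Import GRing.Theory.
Local Open Scope ring_scope.

Lemma actK1c (F : fieldType) (q a : F) s :
  act q (a :: s) K1 = block_mx (q *: act q s K1) 0 0 (q^-1 *: act q s K1).
Proof. by rewrite /= /kron2 !mxE /= !scale0r. Qed.
Lemma actK0c (F : fieldType) (q a : F) s :
  act q (a :: s) K0 = block_mx (q^-1 *: act q s K0) 0 0 (q *: act q s K0).
Proof. by rewrite /= /kron2 !mxE /= !scale0r. Qed.
Lemma actE0pc (F : fieldType) (q a : F) s :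
  act q (a :: s) E0p = block_mx (act q s E0p) 0 ((q^-1 * a) *: act q s K0) (act q s E0p).
Proof. by rewrite /= /kron2 !mxE /= !scale0r ?scale1r add_block_mx !(add0r, addr0). Qed.
Lemma actE1pc (F : fieldType) (q a : F) s :
  act q (a :: s) E1p = block_mx (act q s E1p) (act q s K1) 0 (act q s E1p).
Proof. by rewrite /= /kron2 !mxE /= !scale0r ?scale1r add_block_mx !(add0r, addr0). Qed.
Lemma actE1mc (F : fieldType) (q a : F) s :
  act q (a :: s) E1m = block_mx (q^-1 *: act q s E1m) 0 1%:M (q *: act q s E1m).
Proof. by rewrite /= /kron2 !mxE /= !scale0r ?scale1r add_block_mx !(add0r, addr0). Qed.
Lemma actE0mc (F : fieldType) (q a : F) s :
  act q (a :: s) E0m = block_mx (q *: act q s E0m) ((q * a^-1) *: 1%:M) 0 (q^-1 *: act q s E0m).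
Proof. by rewrite /= /kron2 !mxE /= !scale0r ?scale1r add_block_mx !(add0r, addr0). Qed.

Lemma Ropc (F : fieldType) (q u v a : F) s : q != 0 ->
  Rop q u v (a :: s) = block_mx (Rop q u v s) 0
     ((u * (q^-1 * a)) *: act q s K0 + (v * q) *: act q s K1) (Rop q u v s).
Proof.
move=> hq; rewrite /Rop actE0pc actE1mc actK1c mulmx_block !scale_block_mx add_block_mx.
rewrite !(mulmx0, mul0mx, addr0, add0r, scaler0, mul1mx) -!scalemxAl -!scalemxAr !scalerA.
by rewrite divfK ?mulfK.
Qed.
Lemma Lopc (F : fieldType) (q us vs a : F) s : q != 0 ->
  Lop q us vs (a :: s) = block_mx (Lop q us vs s)
     (us *: act q s K1 + (vs * q * a^-1 * q) *: act q s K0) 0 (Lop q us vs s).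
Proof.
move=> hq; rewrite /Lop actE1pc actE0mc actK0c mulmx_block !scale_block_mx add_block_mx.
rewrite !(mulmx0, mul0mx, addr0, add0r, scaler0, mul1mx) -!scalemxAl -!scalemxAr !scalerA.
by rewrite mul1mx !mulrA divfK ?mulfK.
Qed.

Definition wt (F : fieldType) (q : F) s (z : 'cV[F]_(tdim (size s))) (l : F) :=
  act q s K1 *m z = l *: z /\ act q s K0 *m z = l^-1 *: z.
Arguments wt {F}.

Lemma wt_add (F : fieldType) (q : F) (s : seq F) (z1 z2 : 'cV[F]_(tdim (size s))) (l : F) : wt q s z1 l -> wt q s z2 l -> wt q s (z1 + z2) l.
Proof. by move=> [h1 h2] [h3 h4]; split; rewrite mulmxDr ?h1 ?h2 ?h3 ?h4 scalerDr. Qed.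
Lemma wt_scale (F : fieldType) (q : F) (s : seq F) (z : 'cV[F]_(tdim (size s))) (c l : F) : wt q s z l -> wt q s (c *: z) l.
Proof. by move=> [h1 h2]; split; rewrite -scalemxAr ?h1 ?h2 !scalerA mulrC. Qed.
Lemma wt_eq (F : fieldType) (q : F) (s : seq F) (z : 'cV[F]_(tdim (size s))) (l l' : F) : l = l' -> wt q s z l -> wt q s z l'.
Proof. by move=> ->. Qed.
Lemma wt_comb (F : fieldType) (q : F) (s : seq F) (z : 'cV[F]_(tdim (size s))) (l a1 a2 : F) : wt q s z l ->
  (a1 *: act q s K0 + a2 *: act q s K1) *m z = (a1 * l^-1 + a2 * l) *: z.
Proof. by move=> [h1 h2]; rewrite mulmxDl -!scalemxAl h1 h2 !scalerA scalerDl. Qed.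

Lemma wt_cons (F : fieldType) (q a : F) (s : seq F) (z1 z2 : 'cV[F]_(tdim (size s))) (l : F) : q != 0 ->
  wt q (a :: s) (col_mx z1 z2) l <-> wt q s z1 (l / q) /\ wt q s z2 (l * q).
Proof.
move=> hq; rewrite /wt actK1c actK0c !mul_block_col !(mul0mx, addr0, add0r) !scale_col_mx.
rewrite -!scalemxAl.
split.
  move=> [/eq_col_mx [h1 h2] /eq_col_mx [h3 h4]]; split; split.
  - by rewrite -[_ *m z1](scalerK hq) h1 scalerA mulrC.
  - by rewrite -[_ *m z1](scalerK (invr_neq0 hq)) h3 scalerA invfM invrK mulrC.
  - by rewrite -[_ *m z2](scalerK (invr_neq0 hq)) h2 scalerA invrK mulrC.
  - by rewrite -[_ *m z2](scalerK hq) h4 scalerA invfM mulrC.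
move=> [[h1 h3] [h2 h4]]; split; congr col_mx; rewrite ?h1 ?h2 ?h3 ?h4 scalerA; congr (_ *: _).
- by rewrite mulrC divfK.
- by rewrite mulrC mulfK.
- by rewrite invfM invrK mulrCA mulVf ?mulr1.
- by rewrite invfM mulrCA mulfV ?mulr1.
Qed.

Lemma wt0 (F : fieldType) (q : F) (s : seq F) (l : F) : wt q s 0 l.
Proof. by split; rewrite mulmx0 scaler0. Qed.

Lemma Rop_nil (F : fieldType) (q u v : F) : Rop q u v [::] = 0.
Proof. by rewrite /Rop /= scaler0 mul0mx scaler0 addr0. Qed.
Lemma Lop_nil (F : fieldType) (q u v : F) : Lop q u v [::] = 0.
Proof. by rewrite /Lop /= scaler0 mul0mx scaler0 addr0. Qed.

Lemma Rop_col (F : fieldType) (q u v a : F) (s : seq F) (z1 z2 : 'cV[F]_(tdim (size s))) :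
  q != 0 ->
  Rop q u v (a :: s) *m col_mx z1 z2 = col_mx (Rop q u v s *m z1)
    (((u * (q^-1 * a)) *: act q s K0 + (v * q) *: act q s K1) *m z1 + Rop q u v s *m z2).
Proof. by move=> hq; rewrite Ropc // mul_block_col mul0mx addr0. Qed.

Lemma Lop_col (F : fieldType) (q us vs a : F) (s : seq F) (z1 z2 : 'cV[F]_(tdim (size s))) :
  q != 0 ->
  Lop q us vs (a :: s) *m col_mx z1 z2 = col_mx (Lop q us vs s *m z1 +
    ((vs * q * a^-1 * q) *: act q s K0 + us *: act q s K1) *m z2) (Lop q us vs s *m z2).
Proof. by move=> hq; rewrite Lopc // mul_block_col mul0mx add0r [_ *: act _ _ K1 + _]addrC. Qed.

Lemma wt_R (F : fieldType) (q u v : F) (s : seq F) : q != 0 ->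
  forall (z : 'cV[F]_(tdim (size s))) (l : F),
  wt q s z l -> wt q s (Rop q u v s *m z) (l / q ^+ 2).
Proof.
move=> hq; elim: s => [|a s IH] z l hz.
  by rewrite Rop_nil mul0mx; apply: wt0.
rewrite -[z]vsubmxK in hz *.
have [h1 h2] := proj1 (wt_cons _ _ _ _ _ _ _ hq) hz.
rewrite Rop_col //; apply/(wt_cons _ _ _ _ _ _ _ hq); split.
  by apply: (@wt_eq _ _ _ _ _ _ _ (IH _ _ h1)); rewrite mulrAC.
apply: wt_add; last by apply: (@wt_eq _ _ _ _ _ _ _ (IH _ _ h2)); rewrite mulrAC.
rewrite (@wt_comb _ _ _ _ _ _ _ h1); apply: wt_scale; apply: (@wt_eq _ _ _ _ _ _ _ h1).
by rewrite expr2 invfM mulrA divfK.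
Qed.

Lemma wt_L (F : fieldType) (q u v : F) (s : seq F) : q != 0 ->
  forall (z : 'cV[F]_(tdim (size s))) (l : F),
  wt q s z l -> wt q s (Lop q u v s *m z) (l * q ^+ 2).
Proof.
move=> hq; elim: s => [|a s IH] z l hz.
  by rewrite Lop_nil mul0mx; apply: wt0.
rewrite -[z]vsubmxK in hz *.
have [h1 h2] := proj1 (wt_cons _ _ _ _ _ _ _ hq) hz.
rewrite Lop_col //; apply/(wt_cons _ _ _ _ _ _ _ hq); split.
  apply: wt_add; first by apply: (@wt_eq _ _ _ _ _ _ _ (IH _ _ h1)); rewrite mulrAC.
  rewrite (@wt_comb _ _ _ _ _ _ _ h2); apply: wt_scale; apply: (@wt_eq _ _ _ _ _ _ _ h2).
  by rewrite expr2 mulrA mulfK.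
by apply: (@wt_eq _ _ _ _ _ _ _ (IH _ _ h2)); rewrite mulrAC.
Qed.

Lemma Lvx0 (F : fieldType) (q u v : F) (s : seq F) : q != 0 ->
  Lop q u v s *m vx F (size s) = 0.
Proof.
move=> hq; elim: s => [|a s IH]; first by rewrite Lop_nil mul0mx.
by rewrite /= Lop_col // IH !mulmx0 addr0 col_mx0.
Qed.

Lemma wt_vx (F : fieldType) (q : F) (s : seq F) : q != 0 ->
  wt q s (vx F (size s)) (q ^+ size s).
Proof.
move=> hq; elim: s => [|a s IH].
  by split; rewrite /= mul1mx expr0 ?invr1 scale1r.
apply/(wt_cons _ _ _ _ _ _ _ hq); split; last exact: wt0.
by apply: (@wt_eq _ _ _ _ _ _ _ IH); rewrite exprSr mulfK.
Qed.

Set Implicit Arguments. Unset Strict Implicit.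

Definition tau (F : fieldType) (q u v a l : F) := u * (q^-1 * a) * l^-1 + v * q * l.
Definition sig (F : fieldType) (q us vs a l : F) := vs * q * a^-1 * q * l^-1 + us * l.
Fixpoint lamR (F : fieldType) (q l0 : F) k := if k is k'.+1 then lamR q l0 k' / q^+2 else l0.
Fixpoint lamL (F : fieldType) (q l0 : F) k := if k is k'.+1 then lamL q l0 k' * q^+2 else l0.
Fixpoint cR (F : fieldType) (q u v a l0 : F) i :=
  if i is i'.+1 then cR q u v a l0 i' + tau q u v a (lamR q l0 i') else 0.
Fixpoint eL (F : fieldType) (q us vs a l0 : F) i :=
  if i is i'.+1 then eL q us vs a l0 i' + sig q us vs a (lamL q l0 i') else 0.
Fixpoint zeta (F : fieldType) (q u v us vs : F) (s : seq F) (i : nat) {struct s} : F :=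
  match s with
  | [::] => (i == 0%N)%:R
  | a :: s' => match i with
     | 0 => zeta q u v us vs s' 0
     | i'.+1 => zeta q u v us vs s' i'.+1 +
          eL q us vs a (lamR q (q ^+ size s') i') i'.+1 * cR q u v a (q ^+ size s') i'.+1
          * zeta q u v us vs s' i'
     end
  end.

Lemma iter_scale (F : fieldType) n m (M : 'M[F]_n) (c : F) (z : 'M[F]_(n, m)) i :
  iter i (mulmx M) (c *: z) = c *: iter i (mulmx M) z.
Proof. by elim: i => //= i ->; rewrite scalemxAr. Qed.

Lemma wt_iterR (F : fieldType) (q u v : F) (s : seq F) (w : 'cV[F]_(tdim (size s))) l0 i :
  q != 0 -> wt q s w l0 -> wt q s (iter i (mulmx (Rop q u v s)) w) (lamR q l0 i).
Proof. by move=> hq hw; elim: i => //= i IH; apply: wt_R. Qed.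
Lemma wt_iterL (F : fieldType) (q u v : F) (s : seq F) (w : 'cV[F]_(tdim (size s))) l0 i :
  q != 0 -> wt q s w l0 -> wt q s (iter i (mulmx (Lop q u v s)) w) (lamL q l0 i).
Proof. by move=> hq hw; elim: i => //= i IH; apply: wt_L. Qed.

Lemma iterR (F : fieldType) (q u v a : F) (s : seq F) (w : 'cV[F]_(tdim (size s))) l0 :
  q != 0 -> wt q s w l0 -> forall i,
  iter i (mulmx (Rop q u v (a :: s))) (col_mx w 0) =
  col_mx (iter i (mulmx (Rop q u v s)) w) (cR q u v a l0 i *: iter i.-1 (mulmx (Rop q u v s)) w).
Proof.
move=> hq hw; elim=> [|i IH]; first by rewrite /= scale0r.
rewrite [LHS]/= IH Rop_col // (@wt_comb _ _ _ _ _ _ _ (wt_iterR u v i hq hw)).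
congr col_mx; rewrite -scalemxAr /= [in RHS]scalerDl [in RHS]addrC /tau; congr (_ + _).
by case: i {IH} => [|i] /=; rewrite ?scale0r.
Qed.

Lemma iterL (F : fieldType) (q us vs a : F) (s : seq F) :
  q != 0 -> forall i (X Y : 'cV[F]_(tdim (size s))) l0, wt q s Y l0 ->
  iter i (mulmx (Lop q us vs (a :: s))) (col_mx X Y) =
  col_mx (iter i (mulmx (Lop q us vs s)) X + eL q us vs a l0 i *: iter i.-1 (mulmx (Lop q us vs s)) Y)
         (iter i (mulmx (Lop q us vs s)) Y).
Proof.
move=> hq; elim=> [|i IH] X Y l0 hY; first by rewrite /= scale0r addr0.
rewrite [LHS]/= (IH _ _ _ hY) Lop_col // (@wt_comb _ _ _ _ _ _ _ (wt_iterL us vs i hq hY)).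
congr col_mx; rewrite mulmxDr -addrA; congr (_ + _).
rewrite -scalemxAr /= [in RHS]scalerDl /sig; congr (_ + _).
by case: i {IH} => [|i] /=; rewrite ?scale0r.
Qed.

Lemma zeta0 (F : fieldType) (q u v us vs : F) s : zeta q u v us vs s 0 = 1.
Proof. by elim: s. Qed.

Lemma split_seq (F : fieldType) (q u v us vs : F) (s : seq F) : q != 0 -> forall i,
  iter i (mulmx (Lop q us vs s)) (iter i (mulmx (Rop q u v s)) (vx F (size s)))
  = zeta q u v us vs s i *: vx F (size s).
Proof.
move=> hq; elim: s => [|a s IH] i.
  case: i => [|i]; first by rewrite /= scale1r.
  rewrite /= Lop_nil mul0mx; apply/esym; exact: scale0r.
have hw := @wt_vx _ q s hq.
change (vx F (size (a :: s))) with (col_mx (vx F (size s)) (0 : 'cV[F]_(tdim (size s)))).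
case: i => [|i]; first by rewrite /= zeta0 scale1r.
rewrite (iterR u v a hq hw i.+1).
rewrite (iterL us vs a hq i.+1 _ (@wt_scale _ _ _ _ (cR q u v a (q ^+ size s) i.+1) _ (wt_iterR u v i hq hw))).
rewrite !iter_scale !IH.
have -> : iter i.+1 (mulmx (Lop q us vs s)) (iter i (mulmx (Rop q u v s)) (vx F (size s))) = 0.
  by rewrite iterS IH -scalemxAr Lvx0 // scaler0.
rewrite scaler0 /= scale_col_mx scaler0 !scalerA -scalerDl //=.
Qed.

Section FF.
Variable F : fieldType.
Definition fadd (x y : F) : F := x + y.
Definition fmul (x y : F) : F := x * y.
Definition fopp (x : F) : F := - x.
Definition fsub (x y : F) : F := x - y.
Definition finv (x : F) : F := x^-1.
Definition fdiv (x y : F) : F := x / y.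
Definition f0 : F := 0.
Definition fexp (x : F) (n : nat) : F := x ^+ n.
Definition f1 : F := 1.
Lemma Fring : @ring_theory F f0 f1 fadd fmul fsub fopp eq.
Proof.
rewrite /f0/f1/fadd/fmul/fsub/fopp; split.
- exact: add0r. - exact: addrC. - exact: addrA. - exact: mul1r. - exact: mulrC.
- exact: mulrA. - exact: mulrDl. - by []. - exact: subrr.
Qed.
Lemma Ffield : @field_theory F f0 f1 fadd fmul fsub fopp fdiv finv eq.
Proof.
split=> //; first exact: Fring.
  by apply/eqP; exact: oner_neq0.
by move=> p hp; rewrite /fmul/finv mulVf //; apply/eqP.
Qed.
Add Field Ffield_inst : Ffield.
Lemma feq (x y : F) : @eq F x y -> x = y. Proof. by []. Qed.
Ltac to_f := apply: feq; rewrite -?/(fexp _ _) -?/(finv _) -?/(fopp _) -?/(fmul _ _) -?/(fadd _ _) -?/f1 -?/f0.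
Lemma neqP (x : F) : x != 0 -> x <> f0. Proof. by move/eqP. Qed.

Fixpoint Sg (x : F) j := if j is j'.+1 then Sg x j' + x ^+ j' else 0.

Lemma S_front (x : F) j : Sg x j.+1 = 1 + x * Sg x j.
Proof.
elim: j => [|j IH]; first by rewrite /= add0r expr0 mulr0 addr0.
change (Sg x j.+1 + x ^+ j.+1 = 1 + x * (Sg x j + x ^+ j)).
by rewrite IH mulrDr exprS addrA.
Qed.

Lemma S_rev (x : F) j : x != 0 -> Sg x j.+1 * x^-1 ^+ j = Sg x^-1 j.+1.
Proof.
move=> hx; elim: j => [|j IH]; first by rewrite expr0 mulr1.
rewrite [RHS]S_front -IH.
change ((Sg x j.+1 + x ^+ j.+1) * x^-1 ^+ j.+1 = 1 + x^-1 * (Sg x j.+1 * x^-1 ^+ j)).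
rewrite !exprS exprVn.
have hX : x ^+ j != 0 by rewrite expf_neq0.
to_f; field; repeat split; exact: neqP.
Qed.

Lemma lamR_cf (q l0 : F) k : lamR q l0 k = l0 * (q ^+ 2)^-1 ^+ k.
Proof. by elim: k => [|k IH] /=; rewrite ?expr0 ?mulr1 // IH [_ ^+ k.+1]exprSr mulrA. Qed.
Lemma lamL_cf (q l0 : F) k : lamL q l0 k = l0 * (q ^+ 2) ^+ k.
Proof. by elim: k => [|k IH] /=; rewrite ?expr0 ?mulr1 // IH [_ ^+ k.+1]exprSr mulrA. Qed.

Lemma cR_cf (q u v a l0 : F) j : q != 0 -> l0 != 0 ->
  cR q u v a l0 j = u * (q^-1 * a) * l0^-1 * Sg (q ^+ 2) j + v * q * l0 * Sg (q ^+ 2)^-1 j.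
Proof.
move=> hq hl; elim: j => [|j IH]; first by rewrite /= !mulr0 addr0.
rewrite [LHS]/= IH /tau lamR_cf /= exprVn.
have hG : (q ^+ 2) ^+ j != 0 by rewrite !expf_neq0.
to_f; field; repeat split; exact: neqP.
Qed.

Lemma eL_cf (q us vs a m0 : F) j : q != 0 -> m0 != 0 -> a != 0 ->
  eL q us vs a m0 j = vs * q * a^-1 * q * m0^-1 * Sg (q ^+ 2)^-1 j + us * m0 * Sg (q ^+ 2) j.
Proof.
move=> hq hl ha; elim: j => [|j IH]; first by rewrite /= !mulr0 addr0.
rewrite [LHS]/= IH /sig lamL_cf /= exprVn.
have hG : (q ^+ 2) ^+ j != 0 by rewrite !expf_neq0.
to_f; field; repeat split; exact: neqP.
Qed.

Definition cc (q : F) i := Sg (q ^+ 2) i.+1 * Sg (q ^+ 2)^-1 i.+1.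
Definition beta (q u v us vs a : F) := u * us * q^-1 * a + v * vs * (q * q * q) * a^-1.
Definition DD (q u v us vs : F) n i := cc q i *
  (vs * q * u * (lamR q (q ^+ n) i * q ^+ n)^-1 + us * v * q * (lamR q (q ^+ n) i * q ^+ n)).

Lemma zeta_cons (q u v us vs a : F) s i : q != 0 -> a != 0 ->
  zeta q u v us vs (a :: s) i.+1 = zeta q u v us vs s i.+1 +
     (cc q i * beta q u v us vs a + DD q u v us vs (size s) i) * zeta q u v us vs s i.
Proof.
move=> hq ha.
have -> : zeta q u v us vs (a :: s) i.+1 = zeta q u v us vs s i.+1 + eL q us vs a (lamR q (q ^+ size s) i) i.+1 * cR q u v a (q ^+ size s) i.+1 * zeta q u v us vs s i by [].
congr (_ + _ * _).
have hn : q ^+ size s != 0 by rewrite expf_neq0.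
have hG : (q ^+ 2) ^+ i != 0 by rewrite !expf_neq0.
have hm : lamR q (q ^+ size s) i != 0.
  by rewrite lamR_cf mulf_neq0 // exprVn invr_neq0.
rewrite eL_cf // cR_cf // /DD /cc /beta lamR_cf -!S_rev ?expf_neq0 // !exprVn.
to_f; field; repeat split; exact: neqP.
Qed.

Lemma zeta_big (q u v us vs : F) s i : (size s < i)%N -> zeta q u v us vs s i = 0.
Proof.
elim: s i => [|a s IH] [|i] //= hi.
by rewrite !IH ?mulr0 ?addr0 // ltnW.
Qed.

Lemma Sg_mul (x : F) j : (x - 1) * Sg x j = x ^+ j - 1.
Proof.
elim: j => [|j IH]; first by rewrite /= mulr0 expr0 subrr.
rewrite [Sg x j.+1]/= mulrDr IH exprS.
to_f; ring.
Qed.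

Lemma Sg_neq0 (x : F) j : x ^+ j != 1 -> Sg x j != 0.
Proof.
move=> hx; apply/eqP=> h0; move: (Sg_mul x j); rewrite h0 mulr0 => /esym/eqP.
by rewrite subr_eq0 (negbTE hx).
Qed.

Lemma cc_neq0 (q : F) i : q != 0 -> q ^+ (2 * i.+1) != 1 -> cc q i != 0.
Proof.
move=> hq h; rewrite /cc; apply: mulf_neq0; apply: Sg_neq0; rewrite ?exprVn ?invr_eq1 -exprM //.
Qed.

Lemma beta_root (q u v us vs a bt : F) : q != 0 -> u * us != 0 -> v * vs != 0 ->
  a * (a - bt / (u * us * q^-1)) + v * vs * (q * q * q) / (u * us * q^-1) = 0 ->
  a != 0 /\ beta q u v us vs a = bt.
Proof.
move=> hq h1 h2 H.
have hA : u * us * q^-1 != 0 by rewrite mulf_neq0 ?invr_neq0.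
have ha : a != 0.
  apply/eqP=> a0; move: H; rewrite a0 mul0r add0r; apply/eqP.
  apply: mulf_neq0; last exact: invr_neq0.
  by apply: mulf_neq0 => //; rewrite !mulf_neq0.
split=> //.
have E : beta q u v us vs a - bt = (u * us * q^-1 / a) *
   (a * (a - bt / (u * us * q^-1)) + v * vs * (q * q * q) / (u * us * q^-1)).
  rewrite /beta; move: h1; rewrite mulf_eq0 negb_or => /andP [hu hus].
  to_f; field; repeat split; exact: neqP.
by apply/eqP; rewrite -subr_eq0 E H mulr0.
Qed.
End FF.

Fixpoint pz (F : fieldType) (q u v us vs : F) (z : nat -> F) n i : {poly F} :=
  if i is k.+1 then
    (z k.+1)%:P - (cc q k)%:P * (('X + (DD q u v us vs n k / cc q k)%:P) * pz q u v us vs z n k)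
  else 1.

Lemma pz_size (F : fieldType) (q u v us vs : F) z n m :
  (forall k, (k < m)%N -> cc q k != 0) -> size (pz q u v us vs z n m) = m.+1.
Proof.
elim: m => [|m IH] hc; first by rewrite /= size_poly1.
have hcm : cc q m != 0 by apply: hc.
have IH' := IH (fun k hk => hc k (ltnW (leq_trans hk (leqnn _)))).
have hp : pz q u v us vs z n m != 0 by rewrite -size_poly_eq0 IH'.
have hM : size ((cc q m)%:P * (('X + (DD q u v us vs n m / cc q m)%:P) * pz q u v us vs z n m)) = m.+2.
  by rewrite size_Cmul // size_mul ?size_XaddC ?IH' // -size_poly_eq0 size_XaddC.
rewrite /= addrC size_polyDl size_polyN hM //.
by apply: (leq_ltn_trans (size_polyC_leq1 _)).
Qed.

Lemma pz_eval (F : fieldType) (q u v us vs : F) z n k bt : cc q k != 0 ->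
  (pz q u v us vs z n k.+1).[bt] = z k.+1 - (cc q k * bt + DD q u v us vs n k) * (pz q u v us vs z n k).[bt].
Proof.
move=> hc; rewrite /= hornerD hornerN hornerC hornerCM hornerM hornerD hornerX hornerC; congr (_ - _).
by rewrite mulrA mulrDr [cc q k * (_ / _)]mulrC divfK.
Qed.

Lemma feasible_pred (F : fieldType) (q : F) n : feasible q n.+1 -> feasible q n.
Proof. move=> h i /andP[h1 h2]; apply: h; rewrite h1 /= (leq_trans h2 (leqnSn n)) //. Qed.

Lemma exists_zeta (F : closedFieldType) (q u v us vs : F) : q != 0 -> u * us != 0 -> v * vs != 0 ->
  forall d, feasible q d -> forall z : nat -> F, z 0%N = 1 ->
  exists s : seq F, [/\ size s = d, all (fun a => a != 0) s &
     forall i, (i <= d)%N -> zeta q u v us vs s i = z i].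
Proof.
move=> hq h1 h2; elim=> [|n IH] hd z hz0.
  by exists [::]; split=> // i; rewrite leqn0 => /eqP ->; rewrite /= hz0.
have hc : forall k, (k < n.+1)%N -> cc q k != 0.
  by move=> k hk; apply: cc_neq0 => //; apply: hd; apply/andP; split.
have hs := pz_size u v us vs z n hc.
have [bt hbt] : exists bt, root (pz q u v us vs z n n.+1) bt by apply/closed_rootP; rewrite hs.
pose z' := fun i => (pz q u v us vs z n i).[bt].
have hz'0 : z' 0%N = 1 by rewrite /z' /= hornerC.
have [s [hsz hsa hsz']] := IH (feasible_pred hd) z' hz'0.
pose A := u * us * q^-1; pose C := v * vs * (q * q * q).
pose pa := 'X * ('X - (bt / A)%:P) + (C / A)%:P.
have hXc : 'X - (bt / A)%:P != 0 by rewrite -size_poly_eq0 size_XsubC.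
have hm : size ('X * ('X - (bt / A)%:P)) = 3.
  by rewrite size_mul ?polyX_eq0 // size_polyX size_XsubC.
have hpa : size pa = 3.
  rewrite /pa size_polyDl hm //.
  by apply: (leq_ltn_trans (size_polyC_leq1 _)).
have [a ha] : exists a, root pa a by apply/closed_rootP; rewrite hpa.
move: ha; rewrite /root /pa hornerD hornerM hornerX hornerXsubC hornerC => /eqP H.
have [ha0 hb] := beta_root hq h1 h2 H.
exists (a :: s); split; first by rewrite /= hsz.
  by rewrite /= ha0 hsa.
case=> [|k] hk; first by rewrite !zeta0 hz0.
rewrite zeta_cons // hb hsz.
have e1 : zeta q u v us vs s k = z' k by apply: hsz'.
have e2 : zeta q u v us vs s k.+1 = z' k.+1.
  case: (ltnP k n) => hkn; first by apply: hsz'.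
  have -> : k = n by apply/eqP; rewrite eqn_leq hkn andbT.
  by rewrite zeta_big ?hsz // /z' (eqP hbt).
by rewrite e1 e2 /z' pz_eval ?hc // subrK.
Qed.

Unset Implicit Arguments. Set Strict Implicit.

Theorem proposition7p2 (F : closedFieldType) (q : F)
  (hq0 : q != 0) (hq2 : q ^+ 2 != 1)
  (b c bs cs u v us vs : F)
  (hb : b != 0) (hc : c != 0) (hbs : bs != 0) (hcs : cs != 0)
  (huv : u * vs = - (b * bs * q^-1 * (q - q^-1) ^+ 2))
  (hvu : v * us = - (c * cs * q^-1 * (q - q^-1) ^+ 2))
  (d : nat) (hd : feasible q d)
  (zeta : nat -> F) (hz0 : zeta 0%N = 1) :
  exists alphas : seq F,
    [/\ size alphas = d,
        all (fun a => a != 0) alphas &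
        forall i : nat, (i <= size alphas)%N ->
          iter i (mulmx (Lop q us vs alphas))
               (iter i (mulmx (Rop q u v alphas)) (vx F (size alphas)))
          = zeta i *: vx F (size alphas)].
Proof.
have hqq : q - q^-1 != 0.
  apply: contra hq2; rewrite subr_eq0 => /eqP h.
  by rewrite expr2 {2}h mulfV.
have hK : forall x y : F, x != 0 -> y != 0 -> - (x * y * q^-1 * (q - q^-1) ^+ 2) != 0.
  by move=> x y hx hy; rewrite oppr_eq0 !mulf_neq0 ?invr_neq0 ?expf_neq0.
have huv0 : u * vs != 0 by rewrite huv hK.
have hvu0 : v * us != 0 by rewrite hvu hK.
move: (huv0) (hvu0); rewrite !mulf_eq0 !negb_or => /andP [hu hvs] /andP [hv hus].
have h1 : u * us != 0 by rewrite mulf_neq0.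
have h2 : v * vs != 0 by rewrite mulf_neq0.
have [s [hs ha hz]] := exists_zeta hq0 h1 h2 hd hz0.
exists s; split => // i hi.
by rewrite split_seq // hz // -hs.
Qed.
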